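(* For complex numbers $\alpha_1,\dots,\alpha_r$ and $\theta_i=t_i\frac{\partial}{\partial t_i}$, \[ \Bigl(\prod_{i<j}(\theta_i-\theta_j)\Bigr)e^{\sum_{i=1}^r\alpha_it_i}=e^{\sum_{i=1}^r\alpha_it_i}\prod_{i<j}(\alpha_it_i-\alpha_jt_j). \] *)

(* Defs.v *)
From Stdlib Require Import Reals List ClassicalEpsilon.
Import ListNotations.
Open Scope R_scope.

Definition Cx : Type := (R * R)%type.
Definition C0 : Cx := (0, 0).
Definition C1 : Cx := (1, 0).
Definition RtoC (x : R) : Cx := (x, 0).
Definition Cadd (z w : Cx) : Cx := (fst z + fst w, snd z + snd w).
Definition Csub (z w : Cx) : Cx := (fst z - fst w, snd z - snd w).
Definition Cmul (z w : Cx) : Cx :=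
  (fst z * fst w - snd z * snd w, fst z * snd w + snd z * fst w).
Definition Cexp (z : Cx) : Cx := (exp (fst z) * cos (snd z), exp (fst z) * sin (snd z)).

(** Points: t = (t_0, t_1, ...) ; only t_0..t_(r-1) matter. *)
Definition point := nat -> R.
Definition fn := point -> Cx.

Definition upd (t : point) (i : nat) (x : R) : point :=
  fun j => if Nat.eqb j i then x else t j.

Definition is_partial (f : fn) (i : nat) (t : point) (l : Cx) : Prop :=
  derivable_pt_lim (fun x => fst (f (upd t i x))) (t i) (fst l) /\
  derivable_pt_lim (fun x => snd (f (upd t i x))) (t i) (snd l).

(** Partial derivative d f / d t_i (a chosen witness; 0 if not differentiable). *)
Definition partial (i : nat) (f : fn) : fn :=
  fun t => epsilon (inhabits C0) (fun l => is_partial f i t l).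

Definition theta (i : nat) (f : fn) : fn :=
  fun t => Cmul (RtoC (t i)) (partial i f t).

Definition pairs (r : nat) : list (nat * nat) :=
  flat_map (fun j => map (fun i => (i, j)) (seq 0 j)) (seq 0 r).

(** The operator prod_{i<j} (theta_i - theta_j) (composition of commuting operators). *)
Definition theta_vdm (r : nat) (f : fn) : fn :=
  fold_right (fun p g => fun t => Csub (theta (fst p) g t) (theta (snd p) g t)) f (pairs r).

Definition expsum (r : nat) (alpha : nat -> Cx) : fn :=
  fun t => Cexp (fold_right Cadd C0 (map (fun i => Cmul (alpha i) (RtoC (t i))) (seq 0 r))).

Definition vdm_alpha (r : nat) (alpha : nat -> Cx) : fn :=
  fun t => fold_right Cmul C1
    (map (fun p => Csub (Cmul (alpha (fst p)) (RtoC (t (fst p))))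
                        (Cmul (alpha (snd p)) (RtoC (t (snd p))))) (pairs r)).

(* Main.v *)
Require Import Defs.
From Stdlib Require Import Reals List.
From Stdlib Require Import FunctionalExtensionality ClassicalEpsilon.
From HB Require Import structures.
From mathcomp Require Import all_boot all_order all_algebra.
From mathcomp Require Import Rstruct.
From mathcomp Require Import complex.
From mathcomp Require Import bigenough ssrcomplements mpoly.
Import BigEnough.
From mathcomp Require Import ring.
From mathcomp Require Import fingroup perm.
Import Order.TTheory GRing.Theory Num.Theory.
Local Open Scope ring_scope.
Set Implicit Arguments.
Unset Strict Implicit.
Unset Printing Implicit Defensive.


Notation K := (R[i])%C.

Lemma dpl_ext (f g : R -> R) x l : (forall s, f s = g s) ->
  derivable_pt_lim f x l -> derivable_pt_lim g x l.
Proof. by move=> e; have -> : g = f by apply: functional_extensionality => s; rewrite e. Qed.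

Definition Kder (F : R -> K) (x : R) (l : K) :=
  derivable_pt_lim (fun s => complex.Re (F s)) x (complex.Re l) /\
  derivable_pt_lim (fun s => complex.Im (F s)) x (complex.Im l).

Lemma ReD (a b : K) : complex.Re (a + b) = complex.Re a + complex.Re b.
Proof. by case: a; case: b. Qed.
Lemma ImD (a b : K) : complex.Im (a + b) = complex.Im a + complex.Im b.
Proof. by case: a; case: b. Qed.
Lemma ReM (a b : K) : complex.Re (a * b) = complex.Re a * complex.Re b - complex.Im a * complex.Im b.
Proof. by case: a; case: b. Qed.
Lemma ImM (a b : K) : complex.Im (a * b) = complex.Re a * complex.Im b + complex.Im a * complex.Re b.
Proof. by case: a; case: b. Qed.

Lemma Kder_const (c : K) x : Kder (fun _ => c) x 0.
Proof. by split; apply: derivable_pt_lim_const. Qed.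

Lemma Kder_add F G x a b : Kder F x a -> Kder G x b -> Kder (fun s => F s + G s) x (a + b).
Proof.
move=> [h1 h2] [h3 h4]; split.
- rewrite ReD; apply: dpl_ext (derivable_pt_lim_plus _ _ _ _ _ h1 h3) => s.
  by rewrite ReD.
- rewrite ImD; apply: dpl_ext (derivable_pt_lim_plus _ _ _ _ _ h2 h4) => s.
  by rewrite ImD.
Qed.

Lemma dpl_ext2 (f g : R -> R) x l l' : (forall s, f s = g s) -> l = l' ->
  derivable_pt_lim f x l -> derivable_pt_lim g x l'.
Proof. by move=> e <-; apply: dpl_ext. Qed.

Lemma Kder_mul F G x a b : Kder F x a -> Kder G x b ->
  Kder (fun s => F s * G s) x (a * G x + F x * b).
Proof.
move=> [h1 h2] [h3 h4]; split.
- apply: (dpl_ext2 _ _ (derivable_pt_lim_minus _ _ _ _ _ (derivable_pt_lim_mult _ _ _ _ _ h1 h3)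
      (derivable_pt_lim_mult _ _ _ _ _ h2 h4))).
    by move=> s; rewrite ReM.
  rewrite ReD !ReM /= ?RplusE ?RminusE ?RmultE; ring.
- apply: (dpl_ext2 _ _ (derivable_pt_lim_plus _ _ _ _ _ (derivable_pt_lim_mult _ _ _ _ _ h1 h4)
      (derivable_pt_lim_mult _ _ _ _ _ h2 h3))).
    by move=> s; rewrite ImM.
  rewrite ImD !ImM /= ?RplusE ?RminusE ?RmultE; ring.
Qed.


Lemma dl_lin (a x : R) : derivable_pt_lim (fun s => a * s) x a.
Proof.
apply: (dpl_ext2 _ _ (derivable_pt_lim_scal id a x 1 (derivable_pt_lim_id x))) => //.
by rewrite RmultE mulr1.
Qed.

Lemma dl_explin (a x : R) : derivable_pt_lim (fun s => exp (a * s)) x (exp (a * x) * a).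
Proof. exact: (dpl_ext2 _ _ (derivable_pt_lim_comp _ exp x _ _ (dl_lin a x) (derivable_pt_lim_exp _))). Qed.
Lemma dl_coslin (a x : R) : derivable_pt_lim (fun s => cos (a * s)) x (- sin (a * x) * a).
Proof. exact: (dpl_ext2 _ _ (derivable_pt_lim_comp _ cos x _ _ (dl_lin a x) (derivable_pt_lim_cos _))). Qed.
Lemma dl_sinlin (a x : R) : derivable_pt_lim (fun s => sin (a * s)) x (cos (a * x) * a).
Proof. exact: (dpl_ext2 _ _ (derivable_pt_lim_comp _ sin x _ _ (dl_lin a x) (derivable_pt_lim_sin _))). Qed.

Definition eK (c : K) (s : R) : K :=
  Complex (exp (complex.Re c * s) * cos (complex.Im c * s))
          (exp (complex.Re c * s) * sin (complex.Im c * s)).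

Lemma Kder_eK c x : Kder (eK c) x (c * eK c x).
Proof.
case: c => a b; split => /=.
- apply: (dpl_ext2 _ _ (derivable_pt_lim_mult _ _ _ _ _ (dl_explin a x) (dl_coslin b x))) => //.
  rewrite ?RplusE ?RminusE ?RmultE ?RoppE; ring.
- apply: (dpl_ext2 _ _ (derivable_pt_lim_mult _ _ _ _ _ (dl_explin a x) (dl_sinlin b x))) => //.
  rewrite ?RplusE ?RminusE ?RmultE ?RoppE; ring.
Qed.

Lemma Kder_unique F x a b : Kder F x a -> Kder F x b -> a = b.
Proof.
case: a => a1 a2; case: b => b1 b2 [h1 h2] [h3 h4] /=.
have e1 := uniqueness_limite _ _ _ _ h1 h3; have e2 := uniqueness_limite _ _ _ _ h2 h4.
by simpl in e1, e2; rewrite e1 e2.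
Qed.

Lemma Kder_RC x : Kder (fun s => (s%:C)%C) x 1.
Proof.
split => /=.
- exact: (dpl_ext2 _ _ (derivable_pt_lim_id x)).
- exact: (derivable_pt_lim_const 0 x).
Qed.

Lemma Kder_ext F G x a : (forall s, F s = G s) -> Kder F x a -> Kder G x a.
Proof. by move=> e; have -> : G = F by apply: functional_extensionality => s; rewrite e. Qed.

Lemma Kder_ext2 F G x a b : (forall s, F s = G s) -> a = b -> Kder F x a -> Kder G x b.
Proof. by move=> e <-; apply: Kder_ext. Qed.

Lemma Kder_sum (I : Type) (l : seq I) (F : I -> R -> K) D x :
  (forall i, Kder (F i) x (D i)) ->
  Kder (fun s => \sum_(i <- l) F i s) x (\sum_(i <- l) D i).
Proof.
move=> h; elim: l => [|i l IH].
  by apply: (Kder_ext2 _ _ (Kder_const 0 x)) => [s|]; rewrite big_nil.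
apply: (Kder_ext2 _ _ (Kder_add (h i) IH)) => [s|]; by rewrite big_cons.
Qed.

Lemma Kder_cmul (c : K) F x a : Kder F x a -> Kder (fun s => c * F s) x (c * a).
Proof.
move=> h; apply: (Kder_ext2 _ _ (Kder_mul (Kder_const c x) h)) => //.
by rewrite mul0r add0r.
Qed.

Lemma Kder_poly (p : {poly K}) F x l : Kder F x l ->
  Kder (fun s => p.[F s]) x (p^`().[F x] * l).
Proof.
move=> hF; elim/poly_ind: p => [|p c IH].
  apply: (Kder_ext2 _ _ (Kder_const 0 x)) => [s|]; by rewrite ?horner0 ?deriv0 ?horner0 ?mul0r.
have h := Kder_add (Kder_mul IH hF) (Kder_const c x).
apply: (Kder_ext2 _ _ h) => [s|]; first by rewrite hornerMXaddC.
rewrite derivMXaddC hornerD hornerM hornerX addr0; ring.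
Qed.


Definition Bt (k : nat) : {poly K} := iter k (fun p => 'X * (p^`() + p)) 1.

Lemma BtS k : Bt k.+1 = 'X * ((Bt k)^`() + Bt k).
Proof. by []. Qed.

Lemma Bt_coef_hi k l : (k < l)%N -> (Bt k)`_l = 0.
Proof.
elim: k l => [|k IH] l hl.
  by rewrite /Bt /= coefC; case: l hl.
rewrite BtS coefXM; case: l hl => [//|l] hl /=.
rewrite coefD coef_deriv !IH ?mul0rn ?addr0 //; exact: ltnW.
Qed.

Lemma Bt_coef_top k : (Bt k)`_k = 1.
Proof.
elim: k => [|k IH]; first by rewrite /Bt /= coefC.
by rewrite BtS coefXM /= coefD coef_deriv IH Bt_coef_hi // mul0rn add0r.
Qed.

Lemma size_Bt k : (size (Bt k) <= k.+1)%N.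
Proof. by apply/leq_sizeP => j hj; apply: Bt_coef_hi. Qed.

Definition afn (c : K) (k : nat) (s : R) : K := (Bt k).[c * (s%:C)%C] * eK c s.

Definition afnD (c : K) (k : nat) (x : R) : K :=
  ((Bt k)^`().[c * (x%:C)%C] * (c * 1)) * eK c x + (Bt k).[c * (x%:C)%C] * (c * eK c x).

Lemma Kder_afn c k x : Kder (afn c k) x (afnD c k x).
Proof.
have hF : Kder (fun s => c * (s%:C)%C) x (c * 1) by apply: Kder_cmul; apply: Kder_RC.
exact: (Kder_mul (Kder_poly (Bt k) hF) (Kder_eK c x)).
Qed.

Lemma afnD_theta c k x : (x%:C)%C * afnD c k x = afn c k.+1 x.
Proof. rewrite /afnD /afn BtS hornerM hornerX hornerD; ring. Qed.

Section PsiSec.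
Variable r : nat.
Implicit Types (p q : {mpoly int[r]}) (H : 'X_{1..r} -> K).

Definition Psi H q : K := \sum_(m <- msupp q) (q@_m)%:~R * H m.

Lemma PsiE H p i : (msize p <= i)%N ->
  Psi H p = \sum_(m : 'X_{1..r < i}) (p@_m)%:~R * H m.
Proof.
move=> le_pi; set I : subFinType _ := 'X_{1..r < i}.
rewrite /Psi (big_mksub I) ?msupp_uniq //=; first last.
  by move=> x /msize_mdeg_lt /leq_trans; apply.
rewrite big_rmcond //= => j /memN_msupp_eq0 ->.
by rewrite mul0r.
Qed.

Lemma Psi_is_additive H : additive (Psi H).
Proof.
move=> p q /=; pose_big_enough i.
  rewrite !(@PsiE H _ i) // -sumrB; apply/eq_bigr.
  by case=> /= [m _] _; rewrite mcoeffB intrD mulrDl intrN mulNr.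
by close.
Qed.

HB.instance Definition _ H := GRing.isAdditive.Build {mpoly int[r]} K (Psi H)
  (Psi_is_additive H).

Lemma Psi_X H m : Psi H 'X_[m] = H m.
Proof. by rewrite /Psi msuppX big_seq1 mcoeffX eqxx mul1r. Qed.

Lemma Psi_Z H c p : Psi H (c *: p) = c%:~R * Psi H p.
Proof.
pose_big_enough i.
  rewrite !(@PsiE H _ i) // mulr_sumr; apply/eq_bigr.
  by move=> j _; rewrite mcoeffZ intrM mulrA.
by close.
Qed.

Lemma Psi_mulX H (i : 'I_r) q :
  Psi H ('X_i * q) = Psi (fun m => H (m + U_(i))%MM) q.
Proof.
rewrite {1}(mpolyE q) mulr_sumr raddf_sum /= /Psi; apply: eq_bigr => m _.
by rewrite -scalerAr -mpolyXD -/(Psi H _) Psi_Z Psi_X addmC.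
Qed.

Lemma Psi_sign H k q : Psi H ((-1) ^+ k * q) = (-1) ^+ k * Psi H q.
Proof.
elim: k => [|k IH]; first by rewrite !expr0 !mul1r.
by rewrite !exprS -!mulrA !mulN1r raddfN /= IH.
Qed.

End PsiSec.


Definition toK (z : Cx) : K := Complex z.1 z.2.
Definition fromK (z : K) : Cx := (complex.Re z, complex.Im z).

Lemma fromKK z : fromK (toK z) = z. Proof. by case: z. Qed.
Lemma toKK z : toK (fromK z) = z. Proof. by case: z. Qed.

Lemma eqbE (a b : nat) : Nat.eqb a b = (a == b).
Proof.
case h: (Nat.eqb a b).
  by move/Nat.eqb_eq: h => ->; rewrite eqxx.
by apply/esym/eqP => e; move: h; rewrite e Nat.eqb_refl.
Qed.

Lemma partial_Kder (F : point -> K) i t l :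
  Kder (fun x => F (upd t i x)) (t i) l ->
  partial i (fun t => fromK (F t)) t = fromK l.
Proof.
move=> hl.
have ex : exists l0, is_partial (fun t => fromK (F t)) i t l0.
  by exists (fromK l); case: hl.
have := epsilon_spec (inhabits C0) _ ex; rewrite -/(partial i _ t).
set l0 := partial i _ t => -[h1 h2].
have hk : Kder (fun x => F (upd t i x)) (t i) (toK l0) by split.
by rewrite -(Kder_unique hk hl) fromKK.
Qed.

Lemma theta_Kder (F : point -> K) i t l :
  Kder (fun x => F (upd t i x)) (t i) l ->
  theta i (fun t => fromK (F t)) t = fromK (((t i)%:C)%C * l).
Proof. by move=> h; rewrite /theta (partial_Kder h); clear h; case: l. Qed.

Section Inter.
Variable r : nat.
Variable alpha : nat -> Cx.

Definition aK (j : nat) : K := toK (alpha j).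
Definition Ht (t : point) (m : 'X_{1..r}) : K :=
  \prod_(j < r) afn (aK j) (m j) (t j).
Definition PsiT (q : {mpoly int[r]}) : fn := fun t => fromK (Psi (Ht t) q).

Lemma H_split t m (i : 'I_r) x :
  Ht (upd t i x) m = afn (aK i) (m i) x * \prod_(j < r | j != i) afn (aK j) (m j) (t j).
Proof.
rewrite /Ht (bigD1 i) //=; congr (_ * _).
  by rewrite /upd Nat.eqb_refl.
apply: eq_bigr => j hj; rewrite /upd eqbE.
by have -> : (nat_of_ord j == nat_of_ord i) = false by apply/negbTE.
Qed.

Lemma H_shift t m (i : 'I_r) :
  Ht t (m + U_(i))%MM = afn (aK i) (m i).+1 (t i) * \prod_(j < r | j != i) afn (aK j) (m j) (t j).
Proof.
rewrite /Ht (bigD1 i) //=; congr (_ * _).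
  by rewrite mnmDE mnm1E eqxx addn1.
apply: eq_bigr => j hj; rewrite mnmDE mnm1E.
by rewrite eq_sym (negbTE hj) addn0.
Qed.

Lemma theta_Psi (i : 'I_r) q t : theta i (PsiT q) t = PsiT ('X_i * q) t.
Proof.
set Dm := fun m => (q@_m)%:~R * (afnD (aK i) (m i) (t i) *
             \prod_(j < r | j != i) afn (aK j) (m j) (t j)).
have hk : Kder (fun x => Psi (Ht (upd t i x)) q) (t i) (\sum_(m <- msupp q) Dm m).
  apply: Kder_sum => m; apply: Kder_cmul.
  have := Kder_mul (Kder_afn (aK i) (m i) (t i))
           (Kder_const (\prod_(j < r | j != i) afn (aK j) (m j) (t j)) (t i)).
  apply: Kder_ext2 => [s|]; first by rewrite H_split.
  by rewrite mulr0 addr0.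
rewrite /PsiT (theta_Kder hk); congr fromK.
rewrite Psi_mulX /Psi mulr_sumr; apply: eq_bigr => m _.
rewrite H_shift -(afnD_theta (aK i) (m i) (t i)) /Dm; ring.
Qed.

End Inter.


Lemma Csub_fromK a b : Csub (fromK a) (fromK b) = fromK (a - b).
Proof. by case: a; case: b. Qed.

Section Fold.
Variable r : nat.
Variable alpha : nat -> Cx.

Definition Xn (k : nat) : {mpoly int[r]} := oapp (fun i : 'I_r => 'X_i) 0 (insub k).

Lemma Xn_ord (i : 'I_r) : Xn i = 'X_i.
Proof. by rewrite /Xn valK. Qed.

Lemma theta_Psi_nat k q t : (k < r)%N ->
  theta k (PsiT alpha q) t = PsiT alpha (Xn k * q) t.
Proof.
move=> hk; have -> : k = nat_of_ord (Ordinal hk) by [].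
by rewrite theta_Psi Xn_ord.
Qed.

Definition step (g : fn) (p : nat * nat) : fn :=
  fun t => Csub (theta (fst p) g t) (theta (snd p) g t).

Lemma fold_Psi (ps : list (nat * nat)) q :
  (forall p, List.In p ps -> (fst p < r)%N /\ (snd p < r)%N) ->
  fold_right (fun p g => fun t => Csub (theta (fst p) g t) (theta (snd p) g t)) (PsiT alpha q) ps
  = PsiT alpha ((\prod_(p <- ps) (Xn (fst p) - Xn (snd p))) * q).
Proof.
elim: ps => [|p ps IH] hps /=; first by rewrite big_nil mul1r.
rewrite IH; last by move=> p' h; apply: hps; right.
have [h1 h2] := hps p (or_introl erefl).
apply: functional_extensionality => t.
rewrite !theta_Psi_nat // /PsiT Csub_fromK -raddfB /= -mulrBl big_cons mulrA.
by [].
Qed.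

End Fold.


Lemma seq_iota a b : List.seq a b = iota a b.
Proof. by elim: b a => [|b IH] a //=; rewrite IH. Qed.

Lemma pairs_in r p : List.In p (pairs r) -> (fst p < r)%N /\ (snd p < r)%N.
Proof.
rewrite /pairs in_flat_map => -[j [/in_seq [_ hj] /in_map_iff [i [<- /in_seq [_ hi]]]]] /=.
move/ssrnat.ltP: hj => hj; move/ssrnat.ltP: hi => hi; split => //; exact: ltn_trans hi hj.
Qed.

Lemma pairs_S r : pairs r.+1 = pairs r ++ List.map (fun i => (i, r)) (List.seq 0 r).
Proof. by rewrite /pairs List.seq_S flat_map_app /= app_nil_r. Qed.

Lemma prod_flip (S : comPzRingType) (z : nat -> S) (ps : list (nat * nat)) :
  \prod_(p <- ps) (z (fst p) - z (snd p)) = (-1) ^+ size ps * \prod_(p <- ps) (z (snd p) - z (fst p)).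
Proof.
elim: ps => [|p ps IH]; first by rewrite !big_nil expr0 mul1r.
by rewrite !big_cons IH /= exprS; ring.
Qed.

Lemma prod_pairs_vdm (S : comPzRingType) (z : nat -> S) r :
  \prod_(p <- pairs r) (z (snd p) - z (fst p)) = \prod_(i < r) \prod_(j < r | (i < j)%N) (z j - z i).
Proof.
elim: r => [|r IH]; first by rewrite big_nil big_ord0.
rewrite pairs_S big_cat /= IH big_map seq_iota.
have -> : iota 0 r = index_iota 0 r by rewrite /index_iota subn0.
rewrite big_mkord.
rewrite [RHS]big_ord_recr /=.
rewrite [X in _ = _ * X]big1 ?mulr1; last first.
  by move=> j; rewrite ltnNge -ltnS ltn_ord.
rewrite -big_split /=; apply: eq_bigr => i _.
by rewrite [RHS]big_mkcond big_ord_recr /= ltn_ord -big_mkcond.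
Qed.

Lemma vdm_gen (S : comPzRingType) (z : nat -> S) r :
  \prod_(p <- pairs r) (z (fst p) - z (snd p)) =
  (-1) ^+ size (pairs r) * \det (Vandermonde r (\row_(j < r) z j)).
Proof.
rewrite prod_flip prod_pairs_vdm det_Vandermonde; congr (_ * _).
by apply: eq_bigr => i _; apply: eq_bigr => j _; rewrite !mxE.
Qed.


Section Det.
Variable r : nat.
Variable alpha : nat -> Cx.
Variable t : point.

Definition Amx : 'M[K]_r := \matrix_(i < r, j < r) afn (aK alpha j) i (t j).
Definition yK (j : nat) : K := aK alpha j * ((t j)%:C)%C.

Lemma Psi_det :
  Psi (Ht alpha t) (\det (Vandermonde r (\row_(j < r) Xn r j))) = \det Amx.
Proof.
rewrite /determinant raddf_sum /=; apply: eq_bigr => s _.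
rewrite Psi_sign; congr (_ * _).
pose m := [multinom nat_of_ord ((s^-1)%g j) | j < r].
have e : \prod_i (Vandermonde r (\row_(j < r) Xn r j)) i (s i) = 'X_[m].
  rewrite (@mpolyXE _ _ s m); apply: eq_bigr => i _.
  by rewrite !mxE Xn_ord mnmE permK.
rewrite e Psi_X /Ht (reindex_inj (@perm_inj _ s)) /=.
by apply: eq_bigr => i _; rewrite /Amx mxE mnmE permK.
Qed.

Lemma detA_fact :
  \det Amx = \det (Vandermonde r (\row_(j < r) yK j)) * \prod_(j < r) eK (aK alpha j) (t j).
Proof.
set U : 'M[K]_r := \matrix_(i < r, l < r) (Bt i)`_l.
have eA : Amx = (U *m Vandermonde r (\row_(j < r) yK j)) *m diag_mx (\row_(j < r) eK (aK alpha j) (t j)).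
  apply/matrixP => i j; rewrite mul_mx_diag !mxE /afn.
  rewrite (@horner_coef_wide _ r); last exact: leq_trans (size_Bt i) (ltn_ord i).
  congr (_ * _); apply: eq_bigr => l _; by rewrite !mxE.
have hU : \det U = 1.
  rewrite det_trig; last by apply/is_trig_mxP => i l hil; rewrite mxE Bt_coef_hi.
  by rewrite big1 // => i _; rewrite mxE Bt_coef_top.
rewrite eA !det_mulmx hU mul1r det_diag; congr (_ * _).
by apply: eq_bigr => j _; rewrite mxE.
Qed.

End Det.


Lemma toK_mul z w : toK (Cmul z w) = toK z * toK w.
Proof. by case: z => a b; case: w => c d. Qed.
Lemma toK_sub z w : toK (Csub z w) = toK z - toK w.
Proof. by case: z => a b; case: w => c d. Qed.
Lemma toK_inj z w : toK z = toK w -> z = w.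
Proof. by move=> e; rewrite -(fromKK z) e fromKK. Qed.

Lemma toK_Cexp_add z w : toK (Cexp (Cadd z w)) = toK (Cexp z) * toK (Cexp w).
Proof.
case: z => a b; case: w => c d; rewrite /Cexp /Cadd /toK /=.
rewrite exp_plus cos_plus sin_plus.
congr (_ +i* _)%C; rewrite ?RplusE ?RminusE ?RmultE; ring.
Qed.

Lemma toK_Cexp0 : toK (Cexp C0) = 1.
Proof. rewrite /Cexp /C0 /toK /= exp_0 cos_0 sin_0 ?RmultE mulr1 mulr0 /=; by []. Qed.

Lemma toK_Cexp_lin a s : toK (Cexp (Cmul a (RtoC s))) = eK (toK a) s.
Proof.
case: a => a1 a2; rewrite /Cexp /Cmul /RtoC /toK /eK /=.
by rewrite !Rmult_0_r Rminus_0_r Rplus_0_l.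
Qed.

Lemma toK_fold_exp (g : nat -> Cx) (l : list nat) :
  toK (Cexp (fold_right Cadd C0 (List.map g l))) = \prod_(j <- l) toK (Cexp (g j)).
Proof.
elim: l => [|j l IH] /=; first by rewrite big_nil toK_Cexp0.
by rewrite toK_Cexp_add IH big_cons.
Qed.

Lemma toK_fold_mul (A : Type) (g : A -> Cx) (l : list A) :
  toK (fold_right Cmul Defs.C1 (List.map g l)) = \prod_(j <- l) toK (g j).
Proof.
elim: l => [|j l IH] /=; first by rewrite big_nil.
by rewrite toK_mul IH big_cons.
Qed.

Section Main.
Variable r : nat.
Variable alpha : nat -> Cx.

Lemma Psi1 t : Psi (@Ht r alpha t) 1 = \prod_(j < r) eK (aK alpha j) (t j).
Proof.
rewrite -mpolyX0 Psi_X /Ht; apply: eq_bigr => j _.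
by rewrite mnm0E /afn /Bt /= hornerC mul1r.
Qed.

Lemma expsum_Psi : expsum r alpha = @PsiT r alpha 1.
Proof.
apply: functional_extensionality => t; apply: toK_inj.
rewrite /PsiT toKK Psi1 /expsum toK_fold_exp seq_iota.
have -> : iota 0 r = index_iota 0 r by rewrite /index_iota subn0.
rewrite big_mkord; apply: eq_bigr => j _.
by rewrite toK_Cexp_lin.
Qed.

Lemma vdm_K t : toK (vdm_alpha r alpha t) =
  \prod_(p <- pairs r) (yK alpha t (fst p) - yK alpha t (snd p)).
Proof.
rewrite /vdm_alpha toK_fold_mul; apply: eq_bigr => p _.
by rewrite toK_sub !toK_mul.
Qed.

Theorem main t :
  theta_vdm r (expsum r alpha) t = Cmul (expsum r alpha t) (vdm_alpha r alpha t).
Proof.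
apply: toK_inj; rewrite toK_mul vdm_K (vdm_gen (yK alpha t) r).
rewrite expsum_Psi /theta_vdm (fold_Psi _ _ (@pairs_in r)).
rewrite /PsiT !toKK mulr1 Psi1.
rewrite (vdm_gen (Xn r)) Psi_sign Psi_det detA_fact; ring.
Qed.

End Main.

Theorem mainTheorem14 (r : nat) (alpha : nat -> Cx) (t : point) :
  theta_vdm r (expsum r alpha) t = Cmul (expsum r alpha t) (vdm_alpha r alpha t).
Proof. exact: main. Qed.
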